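(* There is an absolute constant $c>0$ such that the following holds. Let $F:\mathbb{R}\to\mathbb{R}$ be a strictly convex function, and let $A,B,C$ be finite sets of real numbers with $|A|=|B|=|C|=k$. Then \[ \max\{|A+B|,\ |F(A)+C|\}\ge c\,k^{5/4}. \] In particular, $|A+F(A)|\ge c\,k^{5/4}$ for every finite $A\subset\mathbb{R}$ with $|A|=k$.
   Context: $F(A)=\{F(a):a\in A\}$; for finite $X,Y\subset\mathbb{R}$, $X+Y=\{x+y:x\in X,y\in Y\}$. *)

(* Defs.v *)
From Stdlib Require Import Reals List.
Import ListNotations.
Open Scope R_scope.

Definition strictly_convex (F : R -> R) : Prop :=
  forall x y t : R, x <> y -> 0 < t < 1 ->
    F (t * x + (1 - t) * y) < t * F x + (1 - t) * F y.

(* Finite sets of reals are represented by duplicate-free lists. *)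
Definition card (l : list R) : nat := length (nodup Req_EM_T l).

Definition sums (X Y : list R) : list R :=
  flat_map (fun x => map (fun y => x + y) Y) X.

Definition sumset_card (X Y : list R) : nat := card (sums X Y).

(* Main.v *)
Require Import Defs.
From Stdlib Require Import Reals List Lra Lia.
Open Scope R_scope.

Lemma conv_incr F x z h : strictly_convex F -> x < z -> 0 < h ->
  F (x + h) - F x < F (z + h) - F z.
Proof.
intros Hc Hxz Hh.
set (L := z + h - x).
assert (HL : 0 < L) by (unfold L; lra).
set (t := h / L).
assert (Ht0 : 0 < t) by (unfold t; apply Rdiv_lt_0_compat; lra).
assert (Ht1 : t < 1).
{ unfold t. apply (Rmult_lt_reg_r L); [lra|]. unfold Rdiv. rewrite Rmult_assoc, Rinv_l by lra. unfold L; lra. }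
assert (E1 : t * x + (1 - t) * (z + h) = z).
{ unfold t, L. field. lra. }
assert (E2 : (1 - t) * x + (1 - (1 - t)) * (z + h) = x + h).
{ unfold t, L. field. lra. }
pose proof (Hc x (z + h) t ltac:(lra) ltac:(lra)) as H1.
pose proof (Hc x (z + h) (1 - t) ltac:(lra) ltac:(lra)) as H2.
rewrite E1 in H1. rewrite E2 in H2. lra.
Qed.

Lemma mono_up_strict F m x y : strictly_convex F -> m < x -> x < y -> F m <= F y -> F x < F y.
Proof.
intros Hc H1 H2 H3.
set (t := (y - x) / (y - m)).
assert (Ht0 : 0 < t) by (unfold t; apply Rdiv_lt_0_compat; lra).
assert (Ht1 : t < 1).
{ unfold t. apply (Rmult_lt_reg_r (y - m)); [lra|]. unfold Rdiv. rewrite Rmult_assoc, Rinv_l by lra. lra. }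
assert (E : t * m + (1 - t) * y = x) by (unfold t; field; lra).
pose proof (Hc m y t ltac:(lra) ltac:(lra)) as H. rewrite E in H.
assert (t * F m <= t * F y) by (apply Rmult_le_compat_l; lra). lra.
Qed.

Lemma mono_down_strict F m x y : strictly_convex F -> y < x -> x < m -> F m <= F y -> F x < F y.
Proof.
intros Hc H1 H2 H3.
set (t := (m - x) / (m - y)).
assert (Ht0 : 0 < t) by (unfold t; apply Rdiv_lt_0_compat; lra).
assert (Ht1 : t < 1).
{ unfold t. apply (Rmult_lt_reg_r (m - y)); [lra|]. unfold Rdiv. rewrite Rmult_assoc, Rinv_l by lra. lra. }
assert (E : t * y + (1 - t) * m = x) by (unfold t; field; lra).
pose proof (Hc y m t ltac:(lra) ltac:(lra)) as H. rewrite E in H.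
assert ((1-t) * F m <= (1-t) * F y) by (apply Rmult_le_compat_l; lra). lra.
Qed.

Lemma root4 (y : R) : 0 < y -> Rpower (y ^ 4) (1/4) = y.
Proof.
intro Hy. rewrite <- (Rpower_pow 4 y Hy), Rpower_mult.
replace (INR 4 * (1 / 4)) with 1 by (simpl; field). apply Rpower_1; lra.
Qed.

Lemma real_fin (x M : R) : 1 <= x -> 0 <= M -> x ^ 5 <= 65536 * M ^ 4 ->
  M >= 1 / 16 * Rpower x (5 / 4).
Proof.
intros Hx HM0 H.
assert (H1 : 1 <= x ^ 5) by (apply pow_R1_Rle; lra).
assert (HM : 0 < M).
{ destruct (Rle_lt_or_eq_dec 0 M HM0) as [h|h]; auto. subst M. simpl in H. lra. }
set (P := Rpower x (5 / 4)).
assert (HP : 0 < P) by (unfold P, Rpower; apply exp_pos).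
assert (E : P ^ 4 = x ^ 5).
{ rewrite <- (Rpower_pow 4 P HP). unfold P. rewrite Rpower_mult.
  replace (5 / 4 * INR 4) with (INR 5) by (simpl; field).
  apply Rpower_pow; lra. }
assert (H2 : P ^ 4 <= (16 * M) ^ 4) by (rewrite E; replace ((16 * M) ^ 4) with (65536 * M ^ 4) by ring; exact H).
assert (H3 : Rpower (P ^ 4) (1/4) <= Rpower ((16 * M) ^ 4) (1/4)).
{ apply Rle_Rpower_l; [lra|]. split; [apply pow_lt; exact HP | exact H2]. }
rewrite !root4 in H3 by lra. lra.
Qed.

From mathcomp Require Import all_boot.
From mathcomp Require Import Rstruct.
From mathcomp Require Import zify.
Open Scope nat_scope.
Set Implicit Arguments. Unset Strict Implicit.


Lemma tele_le (K : nat) (f : nat -> nat) :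
  (forall i, i < K -> f i <= f i.+1) -> \sum_(i < K) (f i.+1 - f i) <= f K - f 0.
Proof.
move=> hf. rewrite -(big_mkord xpredT (fun i => f i.+1 - f i)).
rewrite telescope_sumn_in //; try (move=> i /andP[_ hi]; exact: hf).
Qed.

Lemma count_big (K m : nat) (g : nat -> nat) :
  \sum_(i < K) (m < g i) * m.+1 <= \sum_(i < K) g i.
Proof.
apply: leq_sum => i _. by case: ltnP => h //=; rewrite mul1n.
Qed.

Lemma count_div (K m b : nat) (g : nat -> nat) :
  \sum_(i < K) g i <= b -> \sum_(i < K) ((m < g i) : nat) <= b %/ m.+1.
Proof.
move=> h. rewrite leq_divRL // big_distrl /=. exact: leq_trans (count_big _ _ _) h.
Qed.

Section Core.
Variables (F : R -> R) (s B C D E : seq R) (rx ry : R -> nat) (m m' : nat).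
Hypotheses (uB : uniq B) (uC : uniq C)
  (hD : forall i b, i < size s -> b \in B -> Rplus (nth R0 s i) b \in D)
  (hE : forall i c, i < size s -> c \in C -> Rplus (F (nth R0 s i)) c \in E)
  (rxlt : {in D, forall u, rx u < size D}) (rxinj : {in D &, injective rx})
  (rylt : {in E, forall u, ry u < size E}) (ryinj : {in E &, injective ry})
  (hx : forall i b, i.+1 < size s -> b \in B ->
          rx (Rplus (nth R0 s i) b) < rx (Rplus (nth R0 s i.+1) b))
  (hy : forall i c, i.+1 < size s -> c \in C ->
          ry (Rplus (F (nth R0 s i)) c) <= ry (Rplus (F (nth R0 s i.+1)) c))
  (hvec : forall i j, i.+1 < size s -> j.+1 < size s ->
     Rminus (nth R0 s i.+1) (nth R0 s i) = Rminus (nth R0 s j.+1) (nth R0 s j) ->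
     Rminus (F (nth R0 s i.+1)) (F (nth R0 s i)) = Rminus (F (nth R0 s j.+1)) (F (nth R0 s j)) ->
     i = j).

Let n := size D.
Let N := size E.
Let K1 := (size s).-1.
Let T := ('I_(size B) * 'I_(size C) * 'I_K1)%type.

Let sv (j : nat) := nth R0 s j.
Let bb (t : T) := nth R0 B t.1.1.
Let cc (t : T) := nth R0 C t.1.2.
Let x0 (t : T) := Rplus (sv t.2) (bb t).
Let x1 (t : T) := Rplus (sv (t.2).+1) (bb t).
Let y0 (t : T) := Rplus (F (sv t.2)) (cc t).
Let y1 (t : T) := Rplus (F (sv (t.2).+1)) (cc t).
Let dx t := rx (x1 t) - rx (x0 t).
Let dy t := ry (y1 t) - ry (y0 t).

Lemma tS (t : T) : (t.2 : nat).+1 < size s.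
Proof. have := ltn_ord t.2. rewrite /K1. lia. Qed.
Lemma tB (t : T) : bb t \in B.
Proof. by apply: mem_nth. Qed.
Lemma tC (t : T) : cc t \in C.
Proof. by apply: mem_nth. Qed.
Lemma x0D t : x0 t \in D.
Proof. apply: hD; [have := tS t; lia| exact: tB]. Qed.
Lemma x1D t : x1 t \in D.
Proof. apply: hD; [exact: tS | exact: tB]. Qed.
Lemma y0E t : y0 t \in E.
Proof. apply: hE; [have := tS t; lia| exact: tC]. Qed.
Lemma y1E t : y1 t \in E.
Proof. apply: hE; [exact: tS | exact: tC]. Qed.

Definition code (t : T) : 'I_n.+1 * 'I_m.+1 * 'I_N.+1 * 'I_m'.+1 :=
  (inord (rx (x0 t)), inord (dx t), inord (ry (y0 t)), inord (dy t)).

Let Sh := [set t : T | (dx t <= m) && (dy t <= m')].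

Lemma code_inj : {in Sh &, injective code}.
Proof.
move=> t t'; rewrite !inE => /andP[hdx hdy] /andP[hdx' hdy'].
rewrite /code => [[e1 e2 e3 e4]].
have ltx := rxlt (x0D t). have ltx' := rxlt (x0D t').
have lty := rylt (y0E t). have lty' := rylt (y0E t').
have {}e1 : rx (x0 t) = rx (x0 t').
  by move/(congr1 (@nat_of_ord _)): e1; rewrite !inordK //; rewrite -/n; lia.
have {}e2 : dx t = dx t'.
  by move/(congr1 (@nat_of_ord _)): e2; rewrite !inordK //; lia.
have {}e3 : ry (y0 t) = ry (y0 t').
  by move/(congr1 (@nat_of_ord _)): e3; rewrite !inordK //; rewrite -/N; lia.
have {}e4 : dy t = dy t'.
  by move/(congr1 (@nat_of_ord _)): e4; rewrite !inordK //; lia.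
have ex0 : x0 t = x0 t' by apply: rxinj => //; apply: x0D.
have ey0 : y0 t = y0 t' by apply: ryinj => //; apply: y0E.
have hxt := hx (tS t) (tB t). have hxt' := hx (tS t') (tB t').
have hyt := hy (tS t) (tC t). have hyt' := hy (tS t') (tC t').
have ex1 : x1 t = x1 t'.
  apply: rxinj; try apply: x1D.
  move: e1 e2 hxt hxt'; rewrite /dx /x0 /x1 /bb /sv. lia.
have ey1 : y1 t = y1 t'.
  apply: ryinj; try apply: y1E.
  move: e3 e4 hyt hyt'; rewrite /dy /y0 /y1 /cc /sv. lia.
have ei : (t.2 : nat) = t'.2.
  apply: hvec; try exact: tS.
  - move: ex0 ex1; rewrite /x0 /x1 /sv => h0 h1.
    set p := nth R0 s t.2 in h0 *; set q := nth R0 s t.2.+1 in h1 *.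
    set p' := nth R0 s t'.2 in h0 *; set q' := nth R0 s t'.2.+1 in h1 *.
    lra.
  - move: ey0 ey1; rewrite /y0 /y1 /sv => h0 h1.
    set p := F (nth R0 s t.2) in h0 *; set q := F (nth R0 s t.2.+1) in h1 *.
    set p' := F (nth R0 s t'.2) in h0 *; set q' := F (nth R0 s t'.2.+1) in h1 *.
    lra.
have eb : bb t = bb t'.
  move: ex0; rewrite /x0 ei => h. apply: (Rplus_eq_reg_l (sv t'.2)); exact h.
have ec : cc t = cc t'.
  move: ey0; rewrite /y0 ei => h. apply: (Rplus_eq_reg_l (F (sv t'.2))); exact h.
move: t t' ei eb ec {hdx hdy hdx' hdy' e1 e2 e3 e4 ltx ltx' lty lty' ex0 ey0 hxt hxt' hyt hyt' ex1 ey1}.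
move=> [[ib ic] i] [[ib' ic'] i'] /= ei.
rewrite /bb /cc /= => eb ec.
have eb' : (ib : nat) = ib'.
  by apply/eqP; rewrite -(nth_uniq R0 (ltn_ord ib) (ltn_ord ib') uB) eb.
have ec' : (ic : nat) = ic'.
  by apply/eqP; rewrite -(nth_uniq R0 (ltn_ord ic) (ltn_ord ic') uC) ec.
by congr (_, _, _); apply: val_inj.
Qed.


Lemma card_setP (P : pred T) : #|[set t | P t]| = \sum_(t : T) (P t : nat).
Proof.
rewrite -sum1_card big_mkcond /=. apply: eq_bigr => t _. rewrite inE. by case: (P t).
Qed.

Lemma sum_pair (G : T -> nat) :
  \sum_(t : T) G t = \sum_(ij : 'I_(size B) * 'I_(size C)) \sum_(k < K1) G (ij, k).
Proof. by rewrite pair_bigA; apply: eq_bigr => -[[]]. Qed.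

Lemma K1_cases : K1 = 0 \/ K1 < size s.
Proof. rewrite /K1. case: (size s) => [|k] /=; lia. Qed.

Lemma L1_bound : #|[set t : T | m < dx t]| <= size B * size C * (n %/ m.+1).
Proof.
rewrite card_setP sum_pair.
apply: (@leq_trans (\sum_(ij : 'I_(size B) * 'I_(size C)) (n %/ m.+1))).
  apply: leq_sum => -[ib ic] _.
  set f := fun i => rx (Rplus (nth R0 s i) (nth R0 B ib)).
  apply: (@count_div _ _ _ (fun i => f i.+1 - f i)).
  have hb : nth R0 B ib \in B by apply: mem_nth.
  apply: leq_trans (@tele_le _ f _) _.
    move=> i hi; apply: ltnW; apply: hx => //. rewrite /K1 in hi. lia.
  case: K1_cases => [->|hK]; first by rewrite subnn.
  apply: leq_trans (leq_subr _ _) _. apply: ltnW. apply: rxlt. exact: hD.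
by rewrite sum_nat_const card_prod !card_ord.
Qed.

Lemma L2_bound : #|[set t : T | m' < dy t]| <= size B * size C * (N %/ m'.+1).
Proof.
rewrite card_setP sum_pair.
apply: (@leq_trans (\sum_(ij : 'I_(size B) * 'I_(size C)) (N %/ m'.+1))).
  apply: leq_sum => -[ib ic] _.
  set f := fun i => ry (Rplus (F (nth R0 s i)) (nth R0 C ic)).
  apply: (@count_div _ _ _ (fun i => f i.+1 - f i)).
  have hc : nth R0 C ic \in C by apply: mem_nth.
  apply: leq_trans (@tele_le _ f _) _.
    move=> i hi; apply: hy => //. rewrite /K1 in hi. lia.
  case: K1_cases => [->|hK]; first by rewrite subnn.
  apply: leq_trans (leq_subr _ _) _. apply: ltnW. apply: rylt. exact: hE.
by rewrite sum_nat_const card_prod !card_ord.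
Qed.

Lemma core_count : size B * size C * K1 <=
  n.+1 * m.+1 * N.+1 * m'.+1 + size B * size C * (n %/ m.+1 + N %/ m'.+1).
Proof.
have cT : #|[set: T]| = size B * size C * K1 by rewrite cardsT !card_prod !card_ord.
rewrite -cT cardsT -(cardsC Sh).
apply: leq_add.
- rewrite -(card_in_imset code_inj). apply: leq_trans (max_card _) _.
  by rewrite !card_prod !card_ord.
- rewrite mulnDr. apply: leq_trans _ (leq_add L1_bound L2_bound).
  apply: (@leq_trans #|[set t | m < dx t] :|: [set t | m' < dy t]|).
    apply: subset_leq_card. apply/subsetP => t; rewrite !inE negb_and -!ltnNge. done.
  rewrite cardsU; exact: leq_subr.
Qed.

End Core.


Lemma arith kb kc K1 n N : 0 < K1 -> K1 <= n -> K1 <= N ->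
  (forall m m', kb*kc*K1 <= n.+1*m.+1*N.+1*m'.+1 + kb*kc*(n %/ m.+1 + N %/ m'.+1)) ->
  kb*kc*K1^3 <= 200*(n*N)^2.
Proof.
move=> hK hn hN H.
set m := (4*n) %/ K1. set m' := (4*N) %/ K1.
have h1 : 4*n < m.+1 * K1 := ltn_ceil _ hK.
have h1' : m * K1 <= 4*n := leq_trunc_div _ _.
have h2 : 4*N < m'.+1 * K1 := ltn_ceil _ hK.
have h2' : m' * K1 <= 4*N := leq_trunc_div _ _.
set a := n %/ m.+1. set b := N %/ m'.+1.
have qa : a * m.+1 <= n := leq_trunc_div _ _.
have qb : b * m'.+1 <= N := leq_trunc_div _ _.
have ha : 4 * a < K1.
  have : (4 * a) * m.+1 < K1 * m.+1 by rewrite -mulnA; lia.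
  by rewrite ltn_pmul2r.
have hb : 4 * b < K1.
  have : (4 * b) * m'.+1 < K1 * m'.+1 by rewrite -mulnA; lia.
  by rewrite ltn_pmul2r.
have HH := H m m'. rewrite -/a -/b in HH.
set P := kb * kc in HH *.
set S := n.+1 * m.+1 * N.+1 * m'.+1 in HH.
have hP : 2 * (P * (a + b)) <= P * K1.
  rewrite mulnCA. apply: leq_mul => //. lia.
have hPK : P * K1 <= 2 * S by lia.
have e : P * K1 ^ 3 = (P * K1) * (K1 * K1) by rewrite expnS expnS expn1; nia.
rewrite e.
apply: (@leq_trans ((2 * S) * (K1 * K1))); first by apply: leq_mul.
have eS : 2 * S * (K1 * K1) = 2 * (n.+1 * N.+1) * ((m.+1 * K1) * (m'.+1 * K1)) by rewrite /S; nia.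
rewrite eS.
have f1 : n.+1 * N.+1 <= (2 * n) * (2 * N) by apply: leq_mul; lia.
have f2 : m.+1 * K1 <= 5 * n by lia.
have f3 : m'.+1 * K1 <= 5 * N by lia.
apply: (@leq_trans (2 * ((2 * n) * (2 * N)) * ((5 * n) * (5 * N)))).
  apply: leq_mul; first by apply: leq_mul.
  by apply: leq_mul.
have -> : 2 * (2 * n * (2 * N)) * (5 * n * (5 * N)) = 200 * (n * N) ^ 2 by nia.
by [].
Qed.


Definition rlt (D : seq R) (u : R) := count (fun d => Rltb d u) D.
Definition rgt (D : seq R) (u : R) := count (fun d => Rltb u d) D.

Lemma rlt_le D u v : Rle u v -> rlt D u <= rlt D v.
Proof.
move=> huv; apply: sub_count => d /RltbP h; apply/RltbP; lra.
Qed.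

Lemma rgt_le D u v : Rle u v -> rgt D v <= rgt D u.
Proof.
move=> huv; apply: sub_count => d /RltbP h; apply/RltbP; lra.
Qed.

Lemma rlt_lt D u v : u \in D -> Rlt u v -> rlt D u < rlt D v.
Proof.
elim: D => [//|x D IH]; rewrite inE => /orP[/eqP <-|hu] huv /=.
- have -> : Rltb u u = false by apply/RltbP; lra.
  have -> : Rltb u v = true by apply/RltbP.
  rewrite /= add0n add1n ltnS. apply: rlt_le; lra.
- have := IH hu huv.
  have : (Rltb x u : nat) <= Rltb x v.
    case: (RltbP x u) => h //=. have -> // : Rltb x v = true by apply/RltbP; lra.
  lia.
Qed.

Lemma rgt_lt D u v : v \in D -> Rlt u v -> rgt D v < rgt D u.
Proof.
elim: D => [//|x D IH]; rewrite inE => /orP[/eqP <-|hu] huv /=.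
- have -> : Rltb v v = false by apply/RltbP; lra.
  have -> : Rltb u v = true by apply/RltbP.
  rewrite /= add0n add1n ltnS. apply: rgt_le; lra.
- have := IH hu huv.
  have : (Rltb v x : nat) <= Rltb u x.
    case: (RltbP v x) => h //=. have -> // : Rltb u x = true by apply/RltbP; lra.
  lia.
Qed.

Lemma rlt_bound D u : u \in D -> rlt D u < size D.
Proof.
elim: D => [//|x D IH]; rewrite inE => /orP[/eqP <-|hu] /=.
- have -> : Rltb u u = false by apply/RltbP; lra.
  rewrite add0n ltnS. exact: count_size.
- have := IH hu. case: (Rltb x u) => /=; lia.
Qed.

Lemma rgt_bound D u : u \in D -> rgt D u < size D.
Proof.
elim: D => [//|x D IH]; rewrite inE => /orP[/eqP <-|hu] /=.
- have -> : Rltb u u = false by apply/RltbP; lra.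
  rewrite add0n ltnS. exact: count_size.
- have := IH hu. case: (Rltb u x) => /=; lia.
Qed.

Lemma rlt_inj D : {in D &, injective (rlt D)}.
Proof.
move=> u v hu hv e. case: (Rtotal_order u v) => [h|[//|h]].
- have := rlt_lt hu h; lia.
- have := rlt_lt hv h; lia.
Qed.

Lemma rgt_inj D : {in D &, injective (rgt D)}.
Proof.
move=> u v hu hv e. case: (Rtotal_order u v) => [h|[//|h]].
- have := rgt_lt hv h; lia.
- have := rgt_lt hu h; lia.
Qed.

Section Geo.
Variables (F : R -> R) (s : seq R) (dir : bool).
Hypothesis Hc : strictly_convex F.
Hypothesis hord : forall i j, i < j < size s ->
  if dir then Rlt (nth R0 s i) (nth R0 s j) else Rlt (nth R0 s j) (nth R0 s i).
Hypothesis hF : forall i j, i < j < size s -> Rle (F (nth R0 s i)) (F (nth R0 s j)).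

Lemma vec_lt i j : i < j -> j.+1 < size s ->
  Rminus (nth R0 s i.+1) (nth R0 s i) = Rminus (nth R0 s j.+1) (nth R0 s j) ->
  Rminus (F (nth R0 s i.+1)) (F (nth R0 s i)) = Rminus (F (nth R0 s j.+1)) (F (nth R0 s j)) ->
  False.
Proof.
move=> hij hj ex ey.
have h1 := hord (i:=i) (j:=i.+1) ltac:(lia).
have h2 := hord (i:=i) (j:=j) ltac:(lia).
have h3 := hord (i:=j) (j:=j.+1) ltac:(lia).
move: ex ey h1 h2 h3.
set a := nth R0 s i; set a' := nth R0 s i.+1; set c := nth R0 s j; set c' := nth R0 s j.+1.
move=> ex ey.
case: dir => h1 h2 h3.
- have := conv_incr F a c (Rminus a' a) Hc h2 ltac:(lra).
  have -> : Rplus a (Rminus a' a) = a' by lra.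
  have -> : Rplus c (Rminus a' a) = c' by lra.
  lra.
- have := conv_incr F c' a' (Rminus a a') Hc ltac:(lra) ltac:(lra).
  have -> : Rplus c' (Rminus a a') = c by lra.
  have -> : Rplus a' (Rminus a a') = a by lra.
  lra.
Qed.

Lemma geo (B C D E : seq R) :
  uniq B -> uniq C ->
  (forall i b, i < size s -> b \in B -> Rplus (nth R0 s i) b \in D) ->
  (forall i c, i < size s -> c \in C -> Rplus (F (nth R0 s i)) c \in E) ->
  forall m m', size B * size C * (size s).-1 <=
    (size D).+1 * m.+1 * (size E).+1 * m'.+1
    + size B * size C * (size D %/ m.+1 + size E %/ m'.+1).
Proof.
move=> uB uC hD hE m m'.
apply: (@core_count F s B C D E (if dir then rlt D else rgt D) (rlt E)) => //.
- by move=> u hu; case: dir; [exact: rlt_bound | exact: rgt_bound].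
- by case: dir; [exact: (@rlt_inj D) | exact: (@rgt_inj D)].
- by move=> u hu; exact: rlt_bound.
- exact: (@rlt_inj E).
- move=> i b hi hb.
  have h := hord (i:=i) (j:=i.+1) ltac:(lia).
  case: dir h => h.
  + apply: rlt_lt; first by apply: hD => //; lia.
    lra.
  + apply: rgt_lt; first by apply: hD => //; lia.
    lra.
- move=> i c hi hc. apply: rlt_le.
  have := hF (i:=i) (j:=i.+1) ltac:(lia). lra.
- move=> i j hi hj ex ey.
  case: (ltngtP i j) => // hij; exfalso.
  + exact: (vec_lt hij hj ex ey).
  + by apply: (vec_lt hij hi); symmetry.
Qed.
End Geo.


Lemma exists_min (F : R -> R) (A : seq R) : A != [::] ->
  exists a, a \in A /\ forall x, x \in A -> Rle (F a) (F x).
Proof.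
elim: A => [//|y A IH] _.
case: (eqVneq A [::]) => [->|hA].
  exists y; split; first by rewrite inE eqxx.
  by move=> x; rewrite inE => /eqP ->; lra.
have [a [ha hmin]] := IH hA.
case: (Rle_dec (F y) (F a)) => h.
- exists y; split; first by rewrite inE eqxx.
  move=> x; rewrite inE => /orP[/eqP ->|hx]; first lra.
  have := hmin x hx; lra.
- exists a; split; first by rewrite inE ha orbT.
  move=> x; rewrite inE => /orP[/eqP ->|hx]; first lra.
  exact: hmin.
Qed.

Lemma Rleb_total : total Rleb.
Proof. move=> x y; case: (Rle_dec x y) => h; [by rewrite (introT (RlebP _ _) h)|].
  have h' : Rle y x by lra. by rewrite (introT (RlebP _ _) h') orbT. Qed.
Lemma Rleb_trans : transitive Rleb.
Proof. move=> y x z /RlebP h1 /RlebP h2; apply/RlebP; lra. Qed.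
Definition Rgeb' (x y : R) := Rleb y x.
Lemma Rgeb_total : total Rgeb'.
Proof. move=> x y; rewrite /Rgeb' orbC; exact: Rleb_total. Qed.
Lemma Rgeb_trans : transitive Rgeb'.
Proof. move=> y x z; rewrite /Rgeb' => h1 h2; exact: Rleb_trans h2 h1. Qed.

Lemma sort_nth_rel (le : rel R) (l : seq R) i j : transitive le -> total le ->
  i < j < size l -> le (nth R0 (sort le l) i) (nth R0 (sort le l) j).
Proof.
move=> htr hto /andP[hij hj].
apply: (sorted_ltn_nth htr R0 (sort_sorted hto l)) => //; rewrite inE size_sort; lia.
Qed.

Lemma sort_nth_neq (le : rel R) (l : seq R) i j : uniq l ->
  i < j < size l -> nth R0 (sort le l) i <> nth R0 (sort le l) j.
Proof.
move=> hu /andP[hij hj] e.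
have hu' : uniq (sort le l) by rewrite sort_uniq.
have hi' : i < size (sort le l) by rewrite size_sort; lia.
have hj' : j < size (sort le l) by rewrite size_sort.
have := nth_uniq R0 hi' hj' hu'. rewrite e eqxx => /esym/eqP. lia.
Qed.

Lemma exists_s (F : R -> R) (A : seq R) : strictly_convex F -> uniq A -> A != [::] ->
  exists (s : seq R) (dir : bool),
    {subset s <= A} /\ size s <= size A /\ size A < 2 * size s /\
    (forall i j, i < j < size s ->
       if dir then Rlt (nth R0 s i) (nth R0 s j) else Rlt (nth R0 s j) (nth R0 s i)) /\
    (forall i j, i < j < size s -> Rle (F (nth R0 s i)) (F (nth R0 s j))) /\
    (forall i j, 0 < i -> i < j < size s -> Rlt (F (nth R0 s i)) (F (nth R0 s j))).
Proof.
move=> Hc uA nA.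
have [a [ha hmin]] := exists_min F nA.
set Au := [seq x <- A | Rleb a x]. set Ad := [seq x <- A | Rleb x a].
have hsz : size A < size Au + size Ad.
  rewrite !size_filter -count_predUI.
  have -> : count (predU (Rleb a) (fun x => Rleb x a)) A = size A.
    rewrite -[RHS]count_predT. apply: eq_count => x /=. exact: Rleb_total.
  rewrite -addn1 leq_add2l -has_count. apply/hasP. exists a => //=.
  by rewrite /Rleb; case: (Rle_dec a a) => //; lra.
case: (leqP (size Ad) (size Au)) => hle.
- exists (sort Rleb Au), true.
  have hmem : forall i, i < size (sort Rleb Au) -> (nth R0 (sort Rleb Au) i \in A) /\ Rle a (nth R0 (sort Rleb Au) i).
    move=> i hi. have := mem_nth R0 hi. rewrite mem_sort mem_filter => /andP[/RlebP h1 h2]. by [].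
  have hord : forall i j, i < j < size (sort Rleb Au) ->
      Rlt (nth R0 (sort Rleb Au) i) (nth R0 (sort Rleb Au) j).
    move=> i j hij. rewrite size_sort in hij.
    have /RlebP h1 := sort_nth_rel Rleb_trans Rleb_total hij.
    have h2 := @sort_nth_neq Rleb _ _ _ (filter_uniq _ uA) hij.
    by case: (Rle_lt_or_eq_dec _ _ h1) => // e; exfalso; exact: h2 e.
  split; [|split; [|split; [|split; [|split]]]].
  + move=> x; rewrite mem_sort mem_filter => /andP[]. by [].
  + by rewrite size_sort size_filter count_size.
  + rewrite size_sort; apply: (leq_trans hsz); by rewrite mul2n -addnn leq_add2l.
  + exact: hord.
  + move=> i j hij. have hj : j < size (sort Rleb Au) by lia.
    have hi : i < size (sort Rleb Au) by lia.
    have [hiA hai] := hmem i hi. have [hjA haj] := hmem j hj.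
    have hl := hord i j hij.
    case: (Req_dec a (nth R0 (sort Rleb Au) i)) => e.
    * rewrite -e. exact: hmin.
    * apply: Rlt_le. apply: (mono_up_strict F a _ _ Hc); [lra|lra|exact: hmin].
  + move=> i j hi0 hij. have hj : j < size (sort Rleb Au) by lia.
    have h0 : 0 < size (sort Rleb Au) by lia.
    have [_ ha0] := hmem 0 h0. have [hjA haj] := hmem j hj.
    have h0i := hord 0 i ltac:(lia).
    have hl := hord i j hij.
    apply: (mono_up_strict F a _ _ Hc); [lra|lra|exact: hmin].
- exists (sort Rgeb' Ad), false.
  have hmem : forall i, i < size (sort Rgeb' Ad) -> (nth R0 (sort Rgeb' Ad) i \in A) /\ Rle (nth R0 (sort Rgeb' Ad) i) a.
    move=> i hi. have := mem_nth R0 hi. rewrite mem_sort mem_filter => /andP[/RlebP h1 h2]. by [].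
  have hord : forall i j, i < j < size (sort Rgeb' Ad) ->
      Rlt (nth R0 (sort Rgeb' Ad) j) (nth R0 (sort Rgeb' Ad) i).
    move=> i j hij. rewrite size_sort in hij.
    have /RlebP h1 := sort_nth_rel Rgeb_trans Rgeb_total hij.
    have h2 := @sort_nth_neq Rgeb' _ _ _ (filter_uniq _ uA) hij.
    by case: (Rle_lt_or_eq_dec _ _ h1) => // e; exfalso; exact: h2 (esym e).
  split; [|split; [|split; [|split; [|split]]]].
  + move=> x; rewrite mem_sort mem_filter => /andP[]. by [].
  + by rewrite size_sort size_filter count_size.
  + rewrite size_sort. lia.
  + exact: hord.
  + move=> i j hij. have hj : j < size (sort Rgeb' Ad) by lia.
    have hi : i < size (sort Rgeb' Ad) by lia.
    have [hiA hai] := hmem i hi. have [hjA haj] := hmem j hj.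
    have hl := hord i j hij.
    case: (Req_dec a (nth R0 (sort Rgeb' Ad) i)) => e.
    * rewrite -e. exact: hmin.
    * apply: Rlt_le. apply: (mono_down_strict F a _ _ Hc); [lra|lra|exact: hmin].
  + move=> i j hi0 hij. have hj : j < size (sort Rgeb' Ad) by lia.
    have h0 : 0 < size (sort Rgeb' Ad) by lia.
    have [_ ha0] := hmem 0 h0. have [hjA haj] := hmem j hj.
    have h0i := hord 0 i ltac:(lia).
    have hl := hord i j hij.
    apply: (mono_down_strict F a _ _ Hc); [lra|lra|exact: hmin].
Qed.


Lemma In_mem (x : R) (l : seq R) : List.In x l <-> x \in l.
Proof.
elim: l => [//|y l IH] /=. rewrite inE. split.
- move=> [->|h]; first by rewrite eqxx. by rewrite IH in h; rewrite h orbT.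
- move=> /orP[/eqP ->|h]; [by left | right; by apply/IH].
Qed.

Lemma card_undup (l : seq R) : Defs.card l = size (undup l).
Proof.
rewrite /Defs.card. elim: l => [//|x l IH] /=.
case: (in_dec RIneq.Req_dec_T x l) => h; case: ifP => h' /=.
- by rewrite IH.
- by move: h; rewrite In_mem h'.
- by exfalso; apply: h; apply/In_mem.
- by rewrite IH.
Qed.

Lemma NoDup_uniq (l : seq R) : NoDup l -> uniq l.
Proof.
elim: l => [//|x l IH] /NoDup_cons_iff [h1 h2] /=.
rewrite IH // andbT. apply/negP; rewrite -In_mem. exact: h1.
Qed.

Lemma length_size (T : Type) (l : list T) : length l = size l.
Proof. by elim: l => //= x l ->. Qed.

Lemma sums_mem (a b : R) (X Y : seq R) : a \in X -> b \in Y -> Rplus a b \in sums X Y.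
Proof.
rewrite -!In_mem => ha hb. rewrite /sums in_flat_map.
exists a; split => //. exact: in_map.
Qed.

Lemma map_mem (F : R -> R) (a : R) (X : seq R) : a \in X -> F a \in List.map F X.
Proof. rewrite -!In_mem => h. exact: in_map. Qed.

Lemma sums_mem_inv (u : R) (X Y : seq R) : u \in sums X Y -> exists a b, a \in X /\ b \in Y /\ u = Rplus a b.
Proof.
rewrite -In_mem /sums in_flat_map => -[a [ha]] /in_map_iff [b [<- hb]].
exists a, b; split; [exact/In_mem | split; [exact/In_mem | by []]].
Qed.

Lemma size_sums_ge (a : R) (X Y : seq R) : a \in X -> uniq Y -> size Y <= size (undup (sums X Y)).
Proof.
move=> ha uY.
have -> : size Y = size [seq Rplus a b | b <- Y] by rewrite size_map.
apply: uniq_leq_size.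
- rewrite map_inj_uniq // => x y. exact: Rplus_eq_reg_l.
- move=> u /mapP [b hb ->]. rewrite mem_undup. exact: sums_mem.
Qed.

Lemma size_sums_ge_l (b : R) (X Y : seq R) : b \in Y -> uniq X -> size X <= size (undup (sums X Y)).
Proof.
move=> hb uX.
have -> : size X = size [seq Rplus a b | a <- X] by rewrite size_map.
apply: uniq_leq_size.
- rewrite map_inj_uniq // => x y. exact: Rplus_eq_reg_r.
- move=> u /mapP [a ha ->]. rewrite mem_undup. exact: sums_mem.
Qed.

Lemma clause1 F (A B C : seq R) k : strictly_convex F -> uniq A -> uniq B -> uniq C ->
  size A = k -> size B = k -> size C = k -> 1 <= k ->
  k ^ 5 <= 65536 * (size (undup (sums A B)) * size (undup (sums (List.map F A) C))) ^ 2.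
Proof.
move=> Hc uA uB uC hA hB hC hk.
set n := size (undup (sums A B)). set N := size (undup (sums (List.map F A) C)).
have a0A : nth R0 A 0 \in A by apply: mem_nth; rewrite hA.
have hn : k <= n by rewrite -hB; apply: size_sums_ge a0A uB.
have hN : k <= N by rewrite -hC; apply: size_sums_ge (map_mem F a0A) uC.
case: (ltnP k 2) => hk2.
  have ek : k = 1 by lia. rewrite ek in hn hN *.
  have h1 : 0 < n * N by rewrite muln_gt0 hn hN.
  by rewrite exp1n muln_gt0 expn_gt0 h1.
have nA : A != [::] by rewrite -size_eq0 hA; lia.
have [s [dir [hsub [hsA [hs2 [hord [hF _]]]]]]] := exists_s Hc uA nA.
have hD : forall i b, i < size s -> b \in B -> Rplus (nth R0 s i) b \in undup (sums A B).
  move=> i b hi hb. rewrite mem_undup. apply: sums_mem => //. apply: hsub. exact: mem_nth.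
have hE : forall i c, i < size s -> c \in C ->
    Rplus (F (nth R0 s i)) c \in undup (sums (List.map F A) C).
  move=> i c hi hc. rewrite mem_undup. apply: sums_mem => //. apply: map_mem. apply: hsub. exact: mem_nth.
have Gm := @geo F s dir Hc hord hF B C _ _ uB uC hD hE.
have Ar := @arith (size B) (size C) (size s).-1 n N.
rewrite hB hC in Ar Gm.
have := Ar ltac:(lia) ltac:(lia) ltac:(lia) Gm.
set K1 := (size s).-1.
have hK : k <= 4 * K1 by rewrite /K1; lia.
move=> h.
have h3 : k ^ 3 <= (4 * K1) ^ 3 by rewrite leq_exp2r.
have e5 : k ^ 5 = k * k * k ^ 3 by rewrite !expnS expn0; lia.
rewrite e5.
apply: (@leq_trans (k * k * (4 * K1) ^ 3)); first by apply: leq_mul.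
have e6 : k * k * (4 * K1) ^ 3 = 64 * (k * k * K1 ^ 3) by rewrite expnMn; lia.
rewrite e6.
apply: (@leq_trans (64 * (200 * (n * N) ^ 2))); first by rewrite leq_mul2l h.
rewrite mulnA leq_mul2r. by rewrite orbT.
Qed.

Lemma clause2 F (A : seq R) k : strictly_convex F -> uniq A -> size A = k -> 1 <= k ->
  k ^ 5 <= 65536 * (size (undup (sums A (List.map F A)))) ^ 4.
Proof.
move=> Hc uA hA hk.
set n := size (undup (sums A (List.map F A))).
have a0A : nth R0 A 0 \in A by apply: mem_nth; rewrite hA.
have hn : k <= n by rewrite -hA; apply: size_sums_ge_l (map_mem F a0A) uA.
case: (ltnP k 2) => hk2.
  have ek : k = 1 by lia. rewrite ek in hn *.
  by rewrite exp1n muln_gt0 expn_gt0 hn.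
have nA : A != [::] by rewrite -size_eq0 hA; lia.
have [s [dir [hsub [hsA [hs2 [hord [hF hFs]]]]]]] := exists_s Hc uA nA.
set B := undup (List.map F A).
have uB : uniq B := undup_uniq _.
have hD : forall i b, i < size s -> b \in B -> Rplus (nth R0 s i) b \in undup (sums A (List.map F A)).
  move=> i b hi hb. rewrite mem_undup. apply: sums_mem; last by rewrite -mem_undup.
  apply: hsub. exact: mem_nth.
have hE : forall i c, i < size s -> c \in A ->
    Rplus (F (nth R0 s i)) c \in undup (sums A (List.map F A)).
  move=> i c hi hc. rewrite mem_undup Rplus_comm. apply: sums_mem => //.
  apply: map_mem. apply: hsub. exact: mem_nth.
have Gm := @geo F s dir Hc hord hF B A _ _ uB uA hD hE.
set K1 := (size s).-1.
have hK1B : K1 <= size B.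
  set t := [seq F x | x <- behead s].
  have -> : K1 = size t by rewrite size_map size_behead.
  apply: uniq_leq_size.
  - apply/(uniqP R0) => i j; rewrite !inE => hi hj.
    rewrite size_map size_behead in hi hj.
    rewrite !(nth_map R0) ?size_behead // !nth_behead => e.
    case: (ltngtP i j) => // hij; exfalso.
    + have := hFs (i.+1) (j.+1) ltac:(lia) ltac:(lia). rewrite e. lra.
    + have := hFs (j.+1) (i.+1) ltac:(lia) ltac:(lia). rewrite e. lra.
  - move=> u /mapP [x hx ->]. rewrite mem_undup. apply: map_mem. apply: hsub.
    exact: mem_behead.
have Ar := @arith (size B) (size A) K1 n n.
rewrite hA in Ar Gm.
have h := Ar ltac:(lia) ltac:(lia) ltac:(lia) Gm.
have hK : k <= 4 * K1 by rewrite /K1; lia.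
have h3 : k ^ 4 <= (4 * K1) ^ 4 by rewrite leq_exp2r.
have e5 : k ^ 5 = k * k ^ 4 by rewrite !expnS expn0; lia.
rewrite e5.
apply: (@leq_trans (k * (4 * K1) ^ 4)); first by apply: leq_mul.
have e6 : k * (4 * K1) ^ 4 = 256 * (K1 * k * K1 ^ 3) by rewrite expnMn; lia.
rewrite e6.
apply: (@leq_trans (256 * (size B * k * K1 ^ 3))).
  rewrite leq_mul2l; apply/orP; right. by rewrite leq_mul2r leq_mul2r hK1B !orbT.
apply: (@leq_trans (256 * (200 * (n * n) ^ 2))); first by rewrite leq_mul2l h orbT.
have -> : (n * n) ^ 2 = n ^ 4 by rewrite expnMn -expnD.
rewrite mulnA leq_mul2r. by rewrite orbT.
Qed.

Unset Implicit Arguments.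
Open Scope R_scope.

Lemma expn_pow (m e : nat) : expn m e = Nat.pow m e.
Proof. elim: e => [//|e IH]. by rewrite expnS IH mulnE. Qed.

Lemma nat_to_R (k X : nat) : (k ^ 5 <= 65536 * X)%N -> INR k ^ 5 <= 65536 * INR X.
Proof.
move/leP. rewrite !expn_pow mulnE => h.
have h2 := le_INR _ _ h. rewrite mult_INR pow_INR (INR_IZR_INZ 65536) in h2.
replace (Z.of_nat 65536) with 65536%Z in h2 by reflexivity. exact h2.
Qed.

Theorem theorem4 :
  exists c : R, 0 < c /\
    (forall (F : R -> R) (A B C : list R) (k : nat),
       strictly_convex F ->
       NoDup A -> NoDup B -> NoDup C ->
       length A = k -> length B = k -> length C = k ->
       (1 <= k)%coq_nat ->
       Rmax (INR (sumset_card A B)) (INR (sumset_card (List.map F A) C))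
         >= c * Rpower (INR k) (5 / 4)) /\
    (forall (F : R -> R) (A : list R) (k : nat),
       strictly_convex F ->
       NoDup A -> length A = k -> (1 <= k)%coq_nat ->
       INR (sumset_card A (List.map F A)) >= c * Rpower (INR k) (5 / 4)).
Proof.
exists (1/16). split; [lra|split].
- move=> F A B C k Hc nA nB nC lA lB lC hk.
  rewrite length_size in lA; rewrite length_size in lB; rewrite length_size in lC.
  have hk' : (1 <= k)%N by apply/leP.
  have h := clause1 Hc (NoDup_uniq nA) (NoDup_uniq nB) (NoDup_uniq nC) lA lB lC hk'.
  rewrite /sumset_card !card_undup.
  set n := size (undup (sums A B)) in h *. set N := size (undup (sums (List.map F A) C)) in h *.
  set M := Rmax (INR n) (INR N).
  have hnM : INR n <= M := Rmax_l _ _.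
  have hNM : INR N <= M := Rmax_r _ _.
  have hn0 := pos_INR n. have hN0 := pos_INR N.
  apply: real_fin.
  + have := le_INR _ _ hk. by rewrite /=.
  + lra.
  + have h2 := nat_to_R _ _ h. rewrite expn_pow mulnE pow_INR mult_INR in h2.
    apply: (Rle_trans _ _ _ h2). apply: Rmult_le_compat_l; first lra.
    replace (M ^ 4) with ((M * M) ^ 2) by ring.
    apply: pow_incr. split; first nra.
    by apply: Rmult_le_compat.
- move=> F A k Hc nA lA hk.
  rewrite length_size in lA.
  have hk' : (1 <= k)%N by apply/leP.
  have h := clause2 Hc (NoDup_uniq nA) lA hk'.
  rewrite /sumset_card !card_undup.
  set n := size (undup (sums A (List.map F A))) in h *.
  have hn0 := pos_INR n.
  apply: real_fin.
  + have := le_INR _ _ hk. by rewrite /=.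
  + lra.
  + have h2 := nat_to_R _ _ h. by rewrite expn_pow pow_INR in h2.
Qed.
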